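(* For all nonnegative integers $L,M$, \[ \sum_{j\in\mathbb{Z}}(-1)^j q^{\frac{1}{2}j(5j+1)}\mathcal{B}(L,M,2j+1,j) =\sum_{n\geq 0}q^{n^2}\begin{bmatrix}2L+M-n-1\\ 2L-1\end{bmatrix}\begin{bmatrix}L-1\\ n\end{bmatrix}. \]
   Context: $(x;q)_n=\prod_{i=0}^{n-1}(1-xq^i)$, $(q)_n=(q;q)_n$; $\begin{bmatrix}n\\ m\end{bmatrix}=\frac{(q)_n}{(q)_m(q)_{n-m}}$ if $m,n-m$ are nonnegative integers, $0$ otherwise. $\mathcal{B}(L,M,a,b)=\begin{bmatrix}L+M+a-b\\ L+a\end{bmatrix}\begin{bmatrix}L+M-a+b\\ L-a\end{bmatrix}$. *)

(* Defs.v *)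
From HB Require Import structures.
From mathcomp Require Import all_boot all_order all_algebra fraction.
Set Implicit Arguments. Unset Strict Implicit. Unset Printing Implicit Defensive.
Import Order.TTheory GRing.Theory Num.Theory.
Local Open Scope ring_scope.

Definition QF : Type := {fraction {poly int}}.

Definition qv : QF := @FracField.tofrac {poly int} 'X.

Definition qpoch (n : nat) : QF := \prod_(i < n) (1 - qv * qv ^+ i).

Definition qbin (n m : int) : QF :=
  if (0 <= m) && (0 <= n - m)
  then qpoch `|n|%N / (qpoch `|m|%N * qpoch `|n - m|%N)
  else 0.

Definition Bq (L M : int) (a b : int) : QF :=
  qbin (L + M + a - b) (L + a) * qbin (L + M - a + b) (L - a).

(* Main.v *)
Require Import Defs.
From HB Require Import structures.
From mathcomp Require Import all_boot all_order all_algebra.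
From mathcomp Require Import fraction zify ring.
Import Order.TTheory GRing.Theory Num.Theory.
Local Open Scope ring_scope.


Lemma qvXn n : qv ^+ n = (@FracField.tofrac {poly int} ('X^n)).
Proof. by rewrite /qv tofracXn. Qed.

Lemma qv_neq0 : qv != 0.
Proof. by rewrite /qv tofrac_eq0 polyX_eq0. Qed.

Lemma oneBqX_neq0 k : (0 < k)%N -> 1 - qv ^+ k != 0.
Proof.
move=> k0; rewrite qvXn -tofrac1 -tofracB tofrac_eq0 subr_eq0.
apply/negP => /eqP h; have := congr1 (fun p : {poly int} => size p) h.
by rewrite size_polyXn size_poly1 /=; case: k k0 h.
Qed.

Lemma qpochS n : qpoch n.+1 = qpoch n * (1 - qv ^+ n.+1).
Proof. rewrite /qpoch big_ord_recr; congr (_ * _); by rewrite -exprS. Qed.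

Lemma qpoch0 : qpoch 0 = 1.
Proof. by rewrite /qpoch big_ord0. Qed.

Lemma qpoch_neq0 n : qpoch n != 0.
Proof.
elim: n => [|n IH]; first by rewrite qpoch0; exact: oner_neq0.
rewrite qpochS; apply: mulf_neq0; [exact: IH | exact: oneBqX_neq0].
Qed.

Lemma qbinE {n m : int} (a b : nat) : m = a%:Z -> n = (a + b)%N%:Z ->
  qbin n m = qpoch (a + b)%N / (qpoch a * qpoch b).
Proof.
move=> -> ->; rewrite /qbin.
have -> : (a + b)%N%:Z - a%:Z = b%:Z by lia.
by rewrite !le0z_nat.
Qed.

Lemma qbin0r (n m : int) : (m < 0) || (n < m) -> qbin n m = 0.
Proof.
move=> h; rewrite /qbin; case: ifP => [/andP [h1 h2]|_]; last by [].
exfalso; lia.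
Qed.

Lemma qbin_n0 (n : int) : 0 <= n -> qbin n 0 = 1.
Proof.
move=> h; have [a ->] : exists a : nat, n = a%:Z by exists `|n|%N; lia.
rewrite (qbinE 0 a); [|by []|by rewrite add0n].
rewrite add0n qpoch0 mul1r divff; [by [] | exact: qpoch_neq0].
Qed.

Lemma qbin_nn (n : int) : 0 <= n -> qbin n n = 1.
Proof.
move=> h; have [a ->] : exists a : nat, n = a%:Z by exists `|n|%N; lia.
rewrite (qbinE a 0); [|by []|by rewrite addn0].
rewrite addn0 qpoch0 mulr1 divff; [by [] | exact: qpoch_neq0].
Qed.

Lemma qbin_sym (n m : int) : qbin n m = qbin n (n - m).
Proof.
case: (boolP ((0 <= m) && (m <= n))) => [/andP[h1 h2]|h].
  have [a ea] : exists a : nat, m = a%:Z by exists `|m|%N; lia.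
  have [b eb] : exists b : nat, n = (a + b)%N%:Z by exists (`|n - m|)%N; lia.
  rewrite (qbinE a b); [|exact: ea|exact: eb].
  rewrite (qbinE b a); [|lia|lia].
  by rewrite addnC [qpoch a * _]mulrC.
rewrite !qbin0r; [by []|lia|lia].
Qed.

Lemma pascal_alg (F : fieldType) (A B C x y : F) : A != 0 -> B != 0 -> (1 - x) != 0 -> (1 - y) != 0 ->
 C * (1 - x*y) / (A*(1-x) * (B*(1-y))) = C/(A*(B*(1-y))) + x * (C / (A*(1-x)*B)).
Proof. move=> h1 h2 h3 h4. field. by rewrite h1 h2 h3 h4. Qed.

Lemma pascal1 (n m : int) : (n != 0) || (m != 0) ->
  qbin n m = qbin (n - 1) (m - 1) + qv ^ m * qbin (n - 1) m.
Proof.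
move=> nz.
case: (boolP ((0 <= m) && (m <= n))) => [/andP[h1 h2]|h]; last first.
  rewrite !qbin0r; [by rewrite mulr0 addr0|lia|lia|lia].
have [a ea] : exists a : nat, m = a%:Z by exists `|m|%N; lia.
have [b eb] : exists b : nat, n = (a + b)%N%:Z by exists (`|n - m|)%N; lia.
case: a ea eb => [|a] ea eb.
  rewrite ea expr0z mul1r (qbin0r (n-1)); last lia.
  rewrite add0r !qbin_n0; [by []|lia|lia].
case: b eb => [|b] eb.
  rewrite (qbin0r (n-1) m); last lia.
  rewrite mulr0 addr0.
  have -> : m - 1 = n - 1 by lia.
  have -> : m = n by lia.
  rewrite !qbin_nn; [by []|lia|lia].
rewrite (qbinE a.+1 b.+1); [|exact: ea|exact: eb].
rewrite (qbinE a b.+1); [|lia|lia].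
rewrite (qbinE a.+1 b); [|lia|lia].
rewrite ea -exprnP.
have -> : (a.+1 + b.+1)%N = (a + b.+1).+1 by lia.
have -> : (a.+1 + b)%N = (a + b.+1)%N by lia.
rewrite (qpochS (a + b.+1)) (qpochS a) (qpochS b).
have -> : qv ^+ (a + b.+1).+1 = qv ^+ a.+1 * qv ^+ b.+1.
  by rewrite -exprD; congr (_ ^+ _); lia.
apply: pascal_alg; [exact: qpoch_neq0|exact: qpoch_neq0|exact: oneBqX_neq0|exact: oneBqX_neq0].
Qed.


Definition zs (N : nat) (f : int -> QF) : QF :=
  \sum_(i < 2 * N + 1) f (i%:Z - N%:Z).

Lemma zsE N f : zs N f = \sum_(0 <= i < (2 * N + 1)%N) f (i%:Z - N%:Z).
Proof. by rewrite big_mkord. Qed.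

Lemma zs_eq N f g : (forall j, f j = g j) -> zs N f = zs N g.
Proof. by move=> h; apply: eq_bigr => i _; rewrite h. Qed.

Lemma zs_grow N f : zs N.+1 f = f (- (N.+1)%:Z) + zs N f + f (N.+1)%:Z.
Proof.
rewrite !zsE.
have -> : (2 * N.+1 + 1)%N = (2 * N + 1).+1.+1 by lia.
rewrite big_nat_recl // big_nat_recr //=.
have -> : (0%N%:Z - (N.+1)%:Z) = - (N.+1)%:Z by lia.
have -> : ((2 * N + 1)%N.+1%:Z - (N.+1)%:Z) = (N.+1)%:Z by lia.
rewrite addrA; congr (_ + _ + _).
by apply: eq_bigr => i _; congr f; lia.
Qed.

Lemma zs_shift1 N f :
  zs N (fun j => f (j + 1)) = zs N f - f (- N%:Z) + f (N.+1)%:Z.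
Proof.
rewrite !zsE.
have -> : (2 * N + 1)%N = (2 * N).+1 by lia.
rewrite big_nat_recr // [in RHS]big_nat_recl //=.
have -> : (0%N%:Z - N%:Z) = - N%:Z by lia.
rewrite [f (- N%:Z) + _]addrC addrK.
have -> : ((2 * N)%N%:Z - N%:Z + 1) = (N.+1)%:Z by lia.
congr (_ + _); apply: eq_bigr => i _; congr f; lia.
Qed.

Lemma zs_rev N f : zs N (fun j => f (- j)) = zs N f.
Proof.
rewrite !zsE big_nat_rev /= add0n.
apply: eq_big_nat => i /andP [_ hi]; congr f; lia.
Qed.

Definition supp (K : nat) (f : int -> QF) :=
  forall j : int, (K%:Z < j) || (j < - K%:Z) -> f j = 0.

Lemma zs_widen K N f : supp K f -> (K <= N)%N -> zs N f = zs K f.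
Proof.
move=> sf; elim: N => [|N IH] hKN.
  by have -> : K = 0%N by lia.
case: (ltnP K N.+1) => h; last by have -> : K = N.+1 by lia.
rewrite zs_grow IH; last by lia.
rewrite !sf; [by rewrite add0r addr0|lia|lia].
Qed.

Lemma zs_shiftc K N (c : nat) f : supp K f -> (K + c < N)%N ->
  zs N (fun j => f (j + c%:Z)) = zs N f.
Proof.
move=> sf; elim: c => [|c IH] h.
  by apply: eq_bigr => i _; rewrite addr0.
transitivity (zs N (fun j => (fun x => f (x + c%:Z)) (j + 1))).
  by apply: zs_eq => j; congr f; lia.
rewrite (zs_shift1 N (fun x => f (x + c%:Z))) IH; last by lia.
rewrite !sf; [by rewrite subr0 addr0|lia|lia].
Qed.

Lemma supp_rev K f : supp K f -> supp K (fun j => f (- j)).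
Proof. move=> sf j hj; apply: sf; lia. Qed.

Lemma zs_shiftnc K N (c : nat) f : supp K f -> (K + c < N)%N ->
  zs N (fun j => f (j - c%:Z)) = zs N f.
Proof.
move=> sf h.
rewrite -[RHS]zs_rev -(@zs_shiftc K N c _ (@supp_rev K f sf) h) -zs_rev.
by apply: eq_bigr => i _; congr f; lia.
Qed.

Lemma zs_shift K N (c : int) f : supp K f -> (K + `|c| < N)%N ->
  zs N (fun j => f (j + c)) = zs N f.
Proof.
move=> sf h; case: c h => [c|c] h.
  exact: (@zs_shiftc K N c f sf h).
have h' : (K + c.+1 < N)%N by lia.
rewrite -(@zs_shiftnc K N c.+1 f sf h').
by apply: eq_bigr => i _; congr f; lia.
Qed.

Lemma zsD N f g : zs N (fun j => f j + g j) = zs N f + zs N g.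
Proof. by rewrite /zs big_split. Qed.

Lemma zsB N f g : zs N (fun j => f j - g j) = zs N f - zs N g.
Proof. by rewrite /zs -sumrB. Qed.

Lemma zsZ N c f : zs N (fun j => c * f j) = c * zs N f.
Proof. by rewrite /zs mulr_sumr. Qed.


Lemma zs0 N f : (forall j, f j = 0) -> zs N f = 0.
Proof. by move=> h; rewrite /zs big1 // => i _; rewrite h. Qed.

Lemma zs_exchange N M (F : int -> int -> QF) :
  zs N (fun j => zs M (fun n => F j n)) = zs M (fun n => zs N (fun j => F j n)).
Proof. by rewrite /zs exchange_big. Qed.

Lemma zs_nat N f : supp N f -> (forall j, j < 0 -> f j = 0) -> f N%:Z = 0 ->
  zs N f = \sum_(n < N) f n%:Z.
Proof.
move=> sf hneg hN; rewrite zsE.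
rewrite (@big_cat_nat _ _ _ N) //=; last by lia.
rewrite big1_seq ?add0r; last first.
  move=> i /andP [_]; rewrite mem_index_iota => /andP [_ hi]; apply: hneg; lia.
have -> : (2 * N + 1)%N = (N + N.+1)%N by lia.
rewrite -{1}[N]add0n big_addn addKn.
rewrite big_nat_recr //= -(big_mkord xpredT (fun n => f n%:Z)).
have -> : ((N + N)%N%:Z - N%:Z) = N%:Z by lia.
rewrite hN addr0; apply: eq_big_nat => i _; congr f; lia.
Qed.


Lemma tri_ex (j : int) : exists k : int, j * (j + 1) = k * 2.
Proof.
have hd := divz_eq j 2.
have h0 : 0 <= (j %% 2)%Z by apply: modz_ge0.
have h1 : (j %% 2)%Z < 2 by apply: ltz_pmod.
set m := (j %/ 2)%Z in hd; set r := (j %% 2)%Z in hd h0 h1.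
have [hr|hr] : r = 0 \/ r = 1 by lia.
  exists (m * (j + 1)); rewrite hd hr; ring.
exists (j * (m + 1)); rewrite hd hr; ring.
Qed.

Definition pent (j : int) : int := ((j * (3 * j + 1)) %/ 2)%Z.

Lemma pent2 j : pent j * 2 = j * (3 * j + 1).
Proof.
have [k hk] := tri_ex j.
rewrite /pent.
have -> : j * (3 * j + 1) = (j * j + k) * 2 by nia.
by rewrite mulzK.
Qed.

Lemma pent5 (j : int) : ((j * (5 * j + 1)) %/ 2)%Z = pent j + j * j.
Proof.
have h := pent2 j.
have -> : j * (5 * j + 1) = (pent j + j * j) * 2 by nia.
by rewrite mulzK.
Qed.

Lemma qzD (a b : int) : qv ^ (a + b) = qv ^ a * qv ^ b.
Proof. exact: (expfzDr a b qv_neq0). Qed.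

Lemma m1_neq0 : (-1 : QF) != 0.
Proof. by rewrite oppr_eq0; exact: oner_neq0. Qed.

Lemma sgS (j : int) : (-1 : QF) ^ (j + 1) = - (-1) ^ j.
Proof. by rewrite (expfzDr j 1 m1_neq0) expr1z mulrN1. Qed.

Lemma sgN (j : int) : (-1 : QF) ^ (- j) = (-1) ^ j.
Proof. by rewrite -exprz_inv invrN1. Qed.

Lemma sgN1 (j : int) : (-1 : QF) ^ (-1 - j) = - (-1) ^ j.
Proof. have -> : -1 - j = - (j + 1) by ring. by rewrite sgN sgS. Qed.

Lemma sg0 : (-1 : QF) ^ (0 : int) = 1.
Proof. by rewrite expr0z. Qed.

Definition wt (j : int) : QF := (-1) ^ j * qv ^ (pent j).
Definition vt (j : int) : QF := (-1) ^ j * qv ^ (pent j + j).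

Lemma W1 (j m : int) : wt (- j) * qv ^ (m + j) = qv ^ m * wt j.
Proof.
rewrite /wt sgN -mulrA -qzD mulrCA -qzD; congr (_ * qv ^ _).
have := pent2 j; have := pent2 (- j); nia.
Qed.

Lemma W2 (j c : int) : wt j * qv ^ (c + j) = qv ^ c * vt j.
Proof.
rewrite /wt /vt -mulrA -qzD mulrCA -qzD; congr (_ * qv ^ _); ring.
Qed.

Lemma W3 (j : int) : vt (-1 - j) = - vt j.
Proof.
rewrite /vt sgN1 mulNr; congr (- (_ * qv ^ _)).
have := pent2 j; have := pent2 (-1 - j); nia.
Qed.

Lemma W4 (j : int) : vt (-1 - j) * qv ^ (-1 - j) = - (qv ^ (-1) * wt j).
Proof.
rewrite /vt /wt sgN1 !mulNr -mulrA -qzD mulrCA -qzD; congr (- (_ * qv ^ _)).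
have := pent2 j; have := pent2 (-1 - j); nia.
Qed.

Lemma wt0 : wt 0 = 1.
Proof.
rewrite /wt sg0 mul1r.
have -> : pent 0 = 0 by rewrite /pent.
by rewrite expr0z.
Qed.

Lemma pbin0 (A B k1 k2 : int) : (B < k2 - k1) || (A < k1 - k2) ->
  qbin A k1 * qbin B k2 = 0.
Proof.
move=> h.
case: (boolP ((0 <= k1) && (k1 <= A))) => [/andP[h1 h2]|h1].
  rewrite (qbin0r B k2) ?mulr0 //; lia.
rewrite (qbin0r A k1) ?mul0r //; lia.
Qed.

Lemma two_neq0 : (2%:R : QF) != 0.
Proof.
rewrite -tofrac1 -tofracMn tofrac_eq0.
by rewrite -polyC_natr polyC_eq0.
Qed.

Lemma selfopp0 (x : QF) : x = - x -> x = 0.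
Proof.
move=> h; have : x *+ 2 = 0 by rewrite mulr2n {1}h addNr.
rewrite -mulr_natr => /eqP; rewrite mulf_eq0 => /orP [/eqP //|h2].
by move: two_neq0; rewrite h2.
Qed.

Lemma zs_refl K N g : supp K g -> (K + 1 < N)%N ->
  zs N (fun j => g (-1 - j)) = zs N g.
Proof.
move=> sg h.
transitivity (zs N (fun j => (fun x => g (- x)) (j + 1%:Z))).
  by apply: zs_eq => j; congr g; ring.
by rewrite (@zs_shift K N 1 (fun x => g (- x)) (@supp_rev K g sg) h) zs_rev.
Qed.

Lemma zs_single N f : (forall j, j != 0 -> f j = 0) -> zs N f = f 0.
Proof.
move=> h.
have sf : supp 0 f by move=> j hj; apply: h; lia.
rewrite (@zs_widen 0 N f sf (leq0n N)).
by rewrite /zs big_ord1 /= subr0.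
Qed.


Lemma pascal2 (n m : int) : (n != 0) || (m != 0) ->
  qbin n m = qv ^ (n - m) * qbin (n - 1) (m - 1) + qbin (n - 1) m.
Proof.
move=> h; rewrite qbin_sym pascal1; last by lia.
rewrite addrC; congr (_ * _ + _).
  rewrite qbin_sym; congr qbin; lia.
rewrite qbin_sym; congr qbin; lia.
Qed.

Lemma zsN N f : zs N (fun j => - f j) = - zs N f.
Proof. by rewrite /zs sumrN. Qed.

Lemma Zanti (A : nat) (M : int) N : (A + 2 < N)%N ->
  zs N (fun j => vt j * (qbin A (M - 1 - j) * qbin A (M + j))) = 0.
Proof.
move=> hN.
set g := fun j => vt j * (qbin A (M - 1 - j) * qbin A (M + j)).
have sg : supp A g.
  by move=> j hj; rewrite /g pbin0 ?mulr0 //; lia.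
apply: selfopp0.
rewrite -{1}(@zs_refl A N g sg); last by lia.
rewrite -zsN; apply: zs_eq => j; rewrite /g W3 mulNr; congr (- (_ * _)).
rewrite mulrC; congr (_ * _); congr qbin; lia.
Qed.

Lemma E0 (A : nat) : forall (N : nat) (m : int), (A + 2 < N)%N ->
  zs N (fun j => wt j * (qbin A (m - j) * qbin A (m + j))) = qbin A m.
Proof.
elim: A => [|A IH] N m hN.
  rewrite zs_single; last first.
    by move=> j hj; rewrite pbin0 ?mulr0 //; lia.
  rewrite wt0 mul1r ?subr0 ?addr0.
  case: (boolP (m == 0)) => [/eqP ->|hm]; first by rewrite qbin_n0 // mulr1.
  by rewrite qbin0r ?mulr0 //; lia.
have P1 : forall k : int, qbin A.+1 k = qbin A (k - 1) + qv ^ k * qbin A k.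
  move=> k; rewrite pascal1; last by lia.
  by have -> : (A.+1)%:Z - 1 = A%:Z by lia.
have P2 : forall k : int, qbin A.+1 k = qv ^ ((A.+1)%:Z - k) * qbin A (k - 1) + qbin A k.
  move=> k; rewrite pascal2; last by lia.
  by have -> : (A.+1)%:Z - 1 = A%:Z by lia.
have IH1 : forall m', zs N (fun j => wt j * (qbin A (m' - j) * qbin A (m' + j))) = qbin A m'.
  by move=> m'; apply: IH; lia.
have Z0 : forall M, zs N (fun j => vt j * (qbin A (M - 1 - j) * qbin A (M + j))) = 0.
  by move=> M; apply: Zanti; lia.
transitivity (zs N (fun j => wt j * (qbin A (m - 1 - j) * qbin A.+1 (m + j)))
  + zs N (fun j => wt j * qv ^ (m - j) * (qbin A (m - j) * qbin A.+1 (m + j)))).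
  rewrite -zsD; apply: zs_eq => j; rewrite P1.
  have -> : m - j - 1 = m - 1 - j by ring.
  ring.
have T2 : zs N (fun j => wt j * qv ^ (m - j) * (qbin A (m - j) * qbin A.+1 (m + j)))
    = qv ^ m * qbin A m.
  rewrite -zs_rev.
  transitivity (zs N (fun j => qv ^ m * ((qv ^ ((A.+1)%:Z - m) * vt j) * (qbin A (m - 1 - j) * qbin A (m + j))
     + wt j * (qbin A (m - j) * qbin A (m + j))))).
    apply: zs_eq => j.
    have -> : m - - j = m + j by ring.
    rewrite (W1 j m) -(W2 j ((A.+1)%:Z - m)) (P2 (m - j)).
    have -> : m - j - 1 = m - 1 - j by ring.
    have -> : (A.+1)%:Z - (m - j) = (A.+1)%:Z - m + j by ring.
    ring.
  rewrite zsZ zsD.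
  transitivity (qv ^ m * (qv ^ ((A.+1)%:Z - m) * zs N (fun j => vt j * (qbin A (m - 1 - j) * qbin A (m + j)))
     + zs N (fun j => wt j * (qbin A (m - j) * qbin A (m + j))))).
    by congr (_ * (_ + _)); rewrite -zsZ; apply: zs_eq => j; rewrite mulrA.
  rewrite Z0 IH1; ring.
rewrite T2.
have T1 : zs N (fun j => wt j * (qbin A (m - 1 - j) * qbin A.+1 (m + j))) = qbin A (m - 1).
  transitivity (zs N (fun j => wt j * (qbin A ((m - 1) - j) * qbin A ((m - 1) + j))
     + (qv ^ m * vt j) * (qbin A (m - 1 - j) * qbin A (m + j)))).
    apply: zs_eq => j; rewrite P1 -(W2 j m).
    have -> : m + j - 1 = m - 1 + j by ring.
    ring.
  rewrite zsD.
  transitivity (zs N (fun j => wt j * (qbin A ((m - 1) - j) * qbin A ((m - 1) + j)))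
     + qv ^ m * zs N (fun j => vt j * (qbin A (m - 1 - j) * qbin A (m + j)))).
    by congr (_ + _); rewrite -zsZ; apply: zs_eq => j; rewrite mulrA.
  rewrite Z0 IH1; ring.
by rewrite T1 (P1 m).
Qed.

Lemma I2 (A : nat) N (n : int) : (A + 4 < N)%N ->
  zs N (fun j => wt j * (qbin (A.+2)%:Z (n - j) * qbin A (n + j)))
  = qbin A n - qv ^ (2 * A%:Z + 3 - 2 * n) * qbin A (n - 1).
Proof.
move=> hN.
have Q2 : forall k : int, qbin (A.+2)%:Z k = qv ^ ((A.+2)%:Z - k) * qbin (A.+1)%:Z (k - 1) + qbin (A.+1)%:Z k.
  move=> k; rewrite pascal2; last by lia.
  by have -> : (A.+2)%:Z - 1 = (A.+1)%:Z by lia.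
have Q1 : forall k : int, qbin (A.+1)%:Z k = qv ^ ((A.+1)%:Z - k) * qbin A (k - 1) + qbin A k.
  move=> k; rewrite pascal2; last by lia.
  by have -> : (A.+1)%:Z - 1 = A%:Z by lia.
have Z0 : forall M, zs N (fun j => vt j * (qbin A (M - 1 - j) * qbin A (M + j))) = 0.
  by move=> M; apply: Zanti; lia.
have E : forall m', zs N (fun j => wt j * (qbin A (m' - j) * qbin A (m' + j))) = qbin A m'.
  by move=> m'; apply: E0; lia.
have Pb : zs N (fun j => wt j * (qbin (A.+1)%:Z (n - j) * qbin A (n + j))) = qbin A n.
  transitivity (zs N (fun j => qv ^ ((A.+1)%:Z - n) * (vt j * (qbin A (n - 1 - j) * qbin A (n + j)))
      + wt j * (qbin A (n - j) * qbin A (n + j)))).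
    apply: zs_eq => j; rewrite Q1 mulrA (mulrA (qv ^ _)) -(W2 j ((A.+1)%:Z - n)).
    have -> : n - j - 1 = n - 1 - j by ring.
    have -> : (A.+1)%:Z - (n - j) = (A.+1)%:Z - n + j by ring.
    ring.
  by rewrite zsD zsZ Z0 E mulr0 add0r.
set g := fun j => vt j * qv ^ j * (qbin A (n - 2 - j) * qbin A (n + j)).
have sg : supp A.+1 g.
  by move=> j hj; rewrite /g pbin0 ?mulr0 //; lia.
have Pg : zs N g = - (qv ^ (-1) * qbin A (n - 1)).
  rewrite -(@zs_refl A.+1 N g sg); last by lia.
  transitivity (zs N (fun j => - (qv ^ (-1) * (wt j * (qbin A ((n - 1) - j) * qbin A ((n - 1) + j)))))).
    apply: zs_eq => j; rewrite /g W4 mulNr -mulrA; congr (- (_ * (_ * _))).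
    rewrite mulrC; congr (_ * _); congr qbin; lia.
  by rewrite zsN zsZ E.
have Pa : zs N (fun j => vt j * (qbin (A.+1)%:Z (n - 1 - j) * qbin A (n + j)))
    = qv ^ ((A.+2)%:Z - n) * zs N g.
  transitivity (zs N (fun j => qv ^ ((A.+2)%:Z - n) * g j
      + vt j * (qbin A (n - 1 - j) * qbin A (n + j)))).
    apply: zs_eq => j; rewrite /g Q1.
    have -> : n - 1 - j - 1 = n - 2 - j by ring.
    have -> : (A.+1)%:Z - (n - 1 - j) = (A.+2)%:Z - n + j by lia.
    rewrite qzD; ring.
  by rewrite zsD (Z0 n) addr0 zsZ.
transitivity (zs N (fun j => qv ^ ((A.+2)%:Z - n) * (vt j * (qbin (A.+1)%:Z (n - 1 - j) * qbin A (n + j)))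
    + wt j * (qbin (A.+1)%:Z (n - j) * qbin A (n + j)))).
  apply: zs_eq => j; rewrite Q2 (mulrA (qv ^ ((A.+2)%:Z - n)) (vt j)) -(W2 j ((A.+2)%:Z - n)).
  have -> : n - j - 1 = n - 1 - j by ring.
  have -> : (A.+2)%:Z - (n - j) = (A.+2)%:Z - n + j by ring.
  ring.
rewrite zsD zsZ Pa Pb Pg.
have -> : qv ^ (2 * A%:Z + 3 - 2 * n) = qv ^ ((A.+2)%:Z - n) * qv ^ ((A.+2)%:Z - n) * qv ^ (-1).
  by rewrite -!qzD; congr (qv ^ _); lia.
ring.
Qed.


Lemma trinom_alg (F : fieldType) (X Y Z U V W : F) :
  X != 0 -> Y != 0 -> Z != 0 -> U != 0 -> V != 0 ->
  X / (Y * Z) * (W / (X * V)) = U / (Z * V) * (W / (U * Y)).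
Proof. move=> h1 h2 h3 h4 h5; field. by rewrite h1 h2 h3 h4 h5. Qed.

Lemma trinom (Q : nat) (d m : int) :
  qbin (d + m) m * qbin (Q%:Z + m) (m + d) = qbin Q d * qbin (Q%:Z + m) Q.
Proof.
case: (boolP ((0 <= m) && (0 <= d) && (d <= Q))) => [/andP[/andP[h1 h2] h3]|h]; last first.
  case: (boolP (m < 0)) => hm.
    rewrite (qbin0r (d + m) m) ?(qbin0r (Q%:Z + m) Q) ?mul0r ?mulr0 //; lia.
  case: (boolP (d < 0)) => hd.
    rewrite (qbin0r (d + m) m) ?(qbin0r Q d) ?mul0r ?mulr0 //; lia.
  rewrite (qbin0r (Q%:Z + m) (m + d)) ?(qbin0r Q d) ?mul0r ?mulr0 //; lia.
have [a ea] : exists a : nat, d = a%:Z by exists `|d|%N; lia.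
have [c ec] : exists c : nat, m = c%:Z by exists `|m|%N; lia.
have [b eb] : exists b : nat, Q = (a + b)%N by exists (Q - a)%N; lia.
rewrite (qbinE c a); [|exact: ec|lia].
rewrite (qbinE (c + a) b); [|lia|lia].
rewrite (qbinE a b); [|exact: ea|lia].
rewrite (qbinE (a + b) c); [|lia|lia].
have -> : (c + a + b)%N = (a + b + c)%N by lia.
apply: trinom_alg; exact: qpoch_neq0.
Qed.

Lemma alg3 (R : comRingType) (a b c e f g h X Y Z W : R) :
  a * b * c = e * f -> a * b = g * h ->
  a * (b * (X * ((c * Y + Z) * W))) = e * (f * (X * (Y * W))) + g * (h * X * (Z * W)).
Proof.
move=> h1 h2.
transitivity (a * b * c * (X * Y * W) + a * b * (X * Z * W)); first by ring.
by rewrite h1 h2; ring.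
Qed.

Definition Rf (P Q : nat) (d m : int) (r : int) : QF :=
  qv ^ (r * (r + d)) * (qbin P r * (qbin Q (r + d) * qbin (P%:Z + Q%:Z + m - r) (P%:Z + Q%:Z))).

Lemma I1p_m0 (P Q : nat) (d : int) N :
  zs N (Rf P Q d 0) = qbin (P%:Z + d + 0) 0 * qbin (Q%:Z + 0) (0 + d).
Proof.
rewrite zs_single; last first.
  move=> r hr; rewrite /Rf.
  case: (boolP (r < 0)) => h.
    by rewrite (qbin0r P r) ?mul0r ?mulr0 //; lia.
  by rewrite (qbin0r (P%:Z + Q%:Z + 0 - r)) ?mulr0 //; lia.
rewrite /Rf mul0r expr0z mul1r (qbin_n0 P) // mul1r.
have -> : P%:Z + Q%:Z + 0%:Z - 0%:Z = P%:Z + Q%:Z by lia.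
have -> : P%:Z + d + 0%:Z = P%:Z + d by lia.
have -> : Q%:Z + 0%:Z = Q%:Z by lia.
have -> : 0%:Z + d = d by lia.
rewrite (qbin_nn (P%:Z + Q%:Z)); last by lia.
rewrite mulr1.
case: (boolP (0 <= P%:Z + d)) => h; first by rewrite qbin_n0 // mul1r.
by rewrite (qbin0r Q d) ?mulr0 //; lia.
Qed.

Lemma I1p (P : nat) : forall (Q : nat) (d m : int) (N : nat), (P + 2 < N)%N ->
  zs N (Rf P Q d m) = qbin (P%:Z + d + m) m * qbin (Q%:Z + m) (m + d).
Proof.
elim: P => [|P IH] Q d m N hN.
  rewrite zs_single; last first.
    by move=> r hr; rewrite /Rf (qbin0r 0 r) ?mul0r ?mulr0 //; lia.
  rewrite /Rf mul0r expr0z mul1r (qbin_n0 0) // mul1r.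
  have -> : 0%:Z + d = d by lia.
  have -> : 0%:Z + Q%:Z + m - 0%:Z = Q%:Z + m by lia.
  have -> : 0%:Z + Q%:Z = Q%:Z by lia.
  by rewrite [RHS]trinom mulrC.
case: (boolP (m == 0)) => [/eqP ->|hm]; first exact: I1p_m0.
pose P1 := (P.+1)%:Z.
pose f0 := Rf P Q d m.
pose fA2 := fun r : int => qv ^ (P1 + Q%:Z) * (qv ^ (r * (r + d)) *
   (qbin P r * (qbin Q (r + d) * qbin (P%:Z + Q%:Z + m - r) (P1 + Q%:Z)))).
pose fB := fun r : int => qv ^ (r * (r + d)) * (qv ^ (P1 - r) * qbin P (r - 1) *
   (qbin Q (r + d) * qbin (P1 + Q%:Z + m - r) (P1 + Q%:Z))).
have e1 : forall r, Rf P.+1 Q d m r = f0 r + fA2 r + fB r.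
  move=> r; rewrite /Rf /f0 /fA2 /fB /Rf.
  rewrite (pascal2 P1 r); last by lia.
  have -> : P1 - 1 = P%:Z by lia.
  rewrite (pascal1 (P1 + Q%:Z + m - r)); last by lia.
  have -> : P1 + Q%:Z + m - r - 1 = P%:Z + Q%:Z + m - r by lia.
  have -> : P1 + Q%:Z - 1 = P%:Z + Q%:Z by lia.
  rewrite /P1; ring.
have sB : supp P.+1 fB.
  move=> r hr; rewrite /fB.
  rewrite (qbin0r P (r - 1)); last by lia.
  by rewrite mulr0 mul0r mulr0.
have e2 : zs N fB = zs N (fun r => fB (r + 1)).
  by rewrite (@zs_shift P.+1 N 1 fB sB) //; lia.
have e3 : forall r, qv ^ (P1 + d) * Rf P Q.+1 (d + 1) (m - 1) r = fA2 r + fB (r + 1).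
  move=> r; rewrite /Rf /fA2 /fB.
  rewrite (pascal2 (Q.+1)%:Z (r + (d + 1))); last by lia.
  have -> : (Q.+1)%:Z - 1 = Q%:Z by lia.
  have -> : r + (d + 1) - 1 = r + d by ring.
  have -> : r + 1 - 1 = r by ring.
  have -> : r + 1 + d = r + (d + 1) by ring.
  have -> : P%:Z + (Q.+1)%:Z + (m - 1) - r = P%:Z + Q%:Z + m - r by lia.
  have -> : P%:Z + (Q.+1)%:Z = P1 + Q%:Z by rewrite /P1; lia.
  have -> : P1 + Q%:Z + m - (r + 1) = P%:Z + Q%:Z + m - r by rewrite /P1; lia.
  apply: alg3.
    by rewrite -!qzD; congr (qv ^ _); rewrite /P1; nia.
  by rewrite -!qzD; congr (qv ^ _); rewrite /P1; nia.
have step : zs N (Rf P.+1 Q d m) = zs N (Rf P Q d m) + qv ^ (P1 + d) * zs N (Rf P Q.+1 (d + 1) (m - 1)).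
  rewrite (zs_eq N (Rf P.+1 Q d m) (fun r => f0 r + fA2 r + fB r) e1) zsD zsD e2 -zsZ.
  rewrite (zs_eq N (fun j => qv ^ (P1 + d) * Rf P Q.+1 (d + 1) (m - 1) j) (fun r => fA2 r + fB (r + 1)) e3) zsD.
  by rewrite addrA.
rewrite step !IH; [|lia|lia].
rewrite (pascal2 (P.+1%:Z + d + m) m); last by lia.
have -> : P.+1%:Z + d + m - m = P1 + d by rewrite /P1; ring.
have -> : P%:Z + (d + 1) + (m - 1) = P.+1%:Z + d + m - 1 by lia.
have -> : P%:Z + d + m = P.+1%:Z + d + m - 1 by lia.
have -> : (Q.+1)%:Z + (m - 1) = Q%:Z + m by lia.
have -> : m - 1 + (d + 1) = m + d by ring.
ring.
Qed.


Lemma zs_eq_in N f g : (forall j : int, - N%:Z <= j <= N%:Z -> f j = g j) -> zs N f = zs N g.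
Proof.
move=> h; apply: eq_bigr => i _; apply: h.
have := ltn_ord i; lia.
Qed.

Lemma supp_Rf P Q d m : supp P (Rf P Q d m).
Proof.
move=> r hr; rewrite /Rf (qbin0r P r); last by lia.
by rewrite mul0r mulr0.
Qed.

Lemma Bq_expand (L' M N2 : nat) (j : int) : (L'.+4 + `|j| < N2)%N ->
  Bq (L'.+1)%:Z M%:Z (2 * j + 1) j
  = zs N2 (fun n => qv ^ ((n - j) * (n + j)) * (qbin (L'.+2)%:Z (n - j) *
      (qbin L'%:Z (n + j) * qbin (2 * (L'.+1)%:Z + M%:Z - n) (2 * (L'.+1)%:Z)))).
Proof.
move=> hN.
have hN' : (L'.+2 + 2 < N2)%N by lia.
have H := @I1p L'.+2 L' (2 * j) (M%:Z - j) N2 hN'.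
rewrite /Bq.
have -> : qbin ((L'.+1)%:Z + M%:Z + (2 * j + 1) - j) ((L'.+1)%:Z + (2 * j + 1))
    = qbin ((L'.+2)%:Z + 2 * j + (M%:Z - j)) (M%:Z - j).
  by rewrite qbin_sym; congr qbin; lia.
have -> : qbin ((L'.+1)%:Z + M%:Z - (2 * j + 1) + j) ((L'.+1)%:Z - (2 * j + 1))
    = qbin (L'%:Z + (M%:Z - j)) (M%:Z - j + 2 * j).
  by rewrite qbin_sym; congr qbin; lia.
rewrite -H.
have hs : (L'.+2 + `|- j| < N2)%N by lia.
rewrite -(@zs_shift L'.+2 N2 (- j) _ (@supp_Rf L'.+2 L' (2 * j) (M%:Z - j)) hs).
apply: zs_eq => n; rewrite /Rf.
have -> : n + - j + 2 * j = n + j by ring.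
have -> : (L'.+2)%:Z + L'%:Z + (M%:Z - j) - (n + - j) = 2 * (L'.+1)%:Z + M%:Z - n by lia.
have -> : (L'.+2)%:Z + L'%:Z = 2 * (L'.+1)%:Z by lia.
by [].
Qed.

Lemma supp_mono K K' f : supp K f -> (K <= K')%N -> supp K' f.
Proof. move=> sf h j hj; apply: sf; lia. Qed.

Theorem lemma5p1 (L M : nat) :
  exists N0 : nat, forall N : nat, (N0 <= N)%N ->
    \sum_(i < 2 * N + 1)
       (let j : int := i%:Z - N%:Z in
        (-1) ^ j * qv ^ ((j * (5 * j + 1)) %/ 2)%Z * Bq L M (2 * j + 1) j)
    = \sum_(n < N)
       qv ^+ (n ^ 2) * qbin (2 * L%:Z + M%:Z - n%:Z - 1) (2 * L%:Z - 1)
                     * qbin (L%:Z - 1) n%:Z.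
Proof.
exists (L + M + 10)%N => N hN.
transitivity (zs N (fun j => (-1) ^ j * qv ^ ((j * (5 * j + 1)) %/ 2)%Z * Bq L M (2 * j + 1) j)).
  by [].
case: L hN => [|L'] hN.
  rewrite zs0; last first.
    move=> j; rewrite /Bq.
    case: (boolP (0 <= 2 * j + 1)) => h.
      have -> : qbin (0%:Z + M%:Z - (2 * j + 1) + j) (0%:Z - (2 * j + 1)) = 0.
        by apply: qbin0r; lia.
      by rewrite !mulr0.
    have -> : qbin (0%:Z + M%:Z + (2 * j + 1) - j) (0%:Z + (2 * j + 1)) = 0.
      by apply: qbin0r; lia.
    by rewrite mul0r mulr0.
  rewrite big1 // => n _.
  have -> : qbin (0%:Z - 1) n%:Z = 0 by apply: qbin0r; lia.
  by rewrite mulr0.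
pose N2 := (N + L' + 6)%N.
pose Y := fun n : int => qbin (2 * (L'.+1)%:Z + M%:Z - n) (2 * (L'.+1)%:Z).
pose F := fun j n : int => qv ^ ((n - j) * (n + j)) * (qbin (L'.+2)%:Z (n - j) *
      (qbin L'%:Z (n + j) * Y n)).
pose s := fun j : int => (-1) ^ j * qv ^ ((j * (5 * j + 1)) %/ 2)%Z.
transitivity (zs N (fun j => s j * zs N2 (fun n => F j n))).
  apply: zs_eq_in => j hj.
  by rewrite (@Bq_expand L' M N2 j); last by rewrite /N2; lia.
transitivity (zs N (fun j => zs N2 (fun n => s j * F j n))).
  by apply: zs_eq => j; rewrite zsZ.
rewrite zs_exchange.
have inner : forall n, zs N (fun j => s j * F j n)
    = qv ^ (n * n) * Y n * (qbin L' n - qv ^ (2 * L'%:Z + 3 - 2 * n) * qbin L' (n - 1)).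
  move=> n.
  transitivity (zs N (fun j => (qv ^ (n * n) * Y n) * (wt j * (qbin (L'.+2)%:Z (n - j) * qbin L' (n + j))))).
    apply: zs_eq => j; rewrite /s /F pent5 /wt.
    have e : qv ^ (pent j + j * j) * qv ^ ((n - j) * (n + j)) = qv ^ (n * n) * qv ^ (pent j).
      by rewrite -!qzD; congr (qv ^ _); ring.
    transitivity ((-1) ^ j * (qv ^ (pent j + j * j) * qv ^ ((n - j) * (n + j))) *
       (qbin (L'.+2)%:Z (n - j) * (qbin L' (n + j) * Y n))); first by ring.
    rewrite e; ring.
  by rewrite zsZ I2 //; lia.
rewrite (zs_eq N2 _ _ inner).
pose g := fun n : int => qv ^ (n * n) * Y n * (qv ^ (2 * L'%:Z + 3 - 2 * n) * qbin L' (n - 1)).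
have sg : supp L'.+1 g.
  move=> n hn; rewrite /g (qbin0r L' (n - 1)); last by lia.
  by rewrite !mulr0.
have hg : zs N2 g = zs N2 (fun n => qv ^ (n * n) * (qv ^ (2 * (L'.+1)%:Z) * Y (n + 1)) * qbin L' n).
  rewrite -(@zs_shift L'.+1 N2 1 g sg); last by rewrite /N2; lia.
  apply: zs_eq => n; rewrite /g.
  have -> : n + 1 - 1 = n by ring.
  have e : qv ^ ((n + 1) * (n + 1)) * qv ^ (2 * L'%:Z + 3 - 2 * (n + 1)) = qv ^ (n * n) * qv ^ (2 * (L'.+1)%:Z).
    by rewrite -!qzD; congr (qv ^ _); lia.
  transitivity (qv ^ ((n + 1) * (n + 1)) * qv ^ (2 * L'%:Z + 3 - 2 * (n + 1)) * Y (n + 1) * qbin L' n); first by ring.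
  rewrite e; ring.
pose h := fun n : int => qv ^ (n * n) * qbin (2 * (L'.+1)%:Z + M%:Z - n - 1) (2 * (L'.+1)%:Z - 1) * qbin L' n.
transitivity (zs N2 h).
  transitivity (zs N2 (fun n => qv ^ (n * n) * Y n * qbin L' n) - zs N2 g).
    by rewrite -zsB; apply: zs_eq => n; rewrite /g; ring.
  rewrite hg -zsB; apply: zs_eq => n; rewrite /h /Y.
  rewrite (pascal1 (2 * (L'.+1)%:Z + M%:Z - n)); last by lia.
  have -> : 2 * (L'.+1)%:Z + M%:Z - (n + 1) = 2 * (L'.+1)%:Z + M%:Z - n - 1 by ring.
  ring.
have sh : supp L' h.
  move=> n hn; rewrite /h (qbin0r L' n); last by lia.
  by rewrite mulr0.
rewrite (@zs_widen L' N2 h sh); last by rewrite /N2; lia.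
rewrite -(@zs_widen L' N h sh); last by lia.
rewrite zs_nat.
- apply: eq_bigr => n _; rewrite /h.
  have -> : (L'.+1)%:Z - 1 = L'%:Z by lia.
  by rewrite -PoszM -exprnP mulnn.
- by apply: (@supp_mono L' N h sh); lia.
- by move=> j hj; rewrite /h (qbin0r L' j) ?mulr0 //; lia.
- by rewrite /h (qbin0r L' N) ?mulr0 //; lia.
Qed.
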